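(* Let $d,a,b$ be positive integers, $r=(d+2b)/d$, $R=(a+d)/d$, and assume $r\ge2$ and $R\ge3r$. Let $\rho=x_1-r$ with $x_1$ as in the context. Then \[ \rho<\frac{5r}{2e^{R/r}}. \]
   Context: For $t\in\mathbb C\setminus\{\pm1,\pm r\}$ let $\Phi(t)=d\log|t+r|-d\log|t-r|+(a+d)(\log|t-1|-\log|t+1|)$. Under $R\ge3r$ there is a unique $x_1\in(r,\infty)$ with $\Phi(x_1)=0$. *)

(* Defs.v *)
From Stdlib Require Import Reals Lra.
Open Scope R_scope.

Definition r_of (d b : nat) : R := (INR d + 2 * INR b) / INR d.
Definition R_of (d a : nat) : R := (INR a + INR d) / INR d.

(* Phi restricted to the real line (x_1 is real):
   Phi(t) = d log|t+r| - d log|t-r| + (a+d)(log|t-1| - log|t+1|). *)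
Definition Phi (d a b : nat) (t : R) : R :=
  let r := r_of d b in
  INR d * ln (Rabs (t + r)) - INR d * ln (Rabs (t - r))
  + (INR a + INR d) * (ln (Rabs (t - 1)) - ln (Rabs (t + 1))).

(* Main.v *)
Require Import Defs.
From Stdlib Require Import Reals Lra Psatz.
Open Scope R_scope.

Lemma ln_le_m1 (y : R) : 0 < y -> ln y <= y - 1.
Proof. intro Hy. pose proof (exp_ineq1_le (ln y)). rewrite exp_ln in H; lra. Qed.

Lemma ln_div (p q : R) : 0 < p -> 0 < q -> ln p - ln q = ln (p / q).
Proof. intros Hp Hq. unfold Rdiv. rewrite ln_mult; [|lra|apply Rinv_0_lt_compat; lra].
rewrite ln_Rinv; lra. Qed.

Lemma ln_up (p q : R) : 0 < q -> 0 < p -> ln p - ln q <= (p - q) / q.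
Proof. intros Hq Hp. rewrite ln_div by lra.
pose proof (ln_le_m1 (p/q)) as H. assert (0 < p/q) by (apply Rdiv_lt_0_compat; lra).
replace ((p-q)/q) with (p/q - 1) by (field; lra). lra. Qed.

Lemma ln_lo (p q : R) : 0 < q -> 0 < p -> (p - q) / p <= ln p - ln q.
Proof. intros Hq Hp. pose proof (ln_up q p Hp Hq).
replace ((p-q)/p) with (-((q-p)/p)) by (field; lra). lra. Qed.

Theorem lemma4p14 (d a b : nat) (x1 : R) :
  (0 < d)%nat -> (0 < a)%nat -> (0 < b)%nat ->
  2 <= r_of d b ->
  3 * r_of d b <= R_of d a ->
  r_of d b < x1 ->
  Phi d a b x1 = 0 ->
  x1 - r_of d b < 5 * r_of d b / (2 * exp (R_of d a / r_of d b)).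
Proof.
  intros Hd Ha Hb Hr HR Hx HPhi.
  unfold Phi in HPhi.
  assert (Dp : 0 < INR d) by (apply lt_0_INR; lia).
  assert (ER : INR a + INR d = R_of d a * INR d) by (unfold R_of; field; lra).
  set (r := r_of d b) in *. set (Rr := R_of d a) in *. set (x := x1) in *.
  rewrite ER in HPhi.
  rewrite (Rabs_pos_eq (x + r)) in HPhi by lra.
  rewrite (Rabs_pos_eq (x - r)) in HPhi by lra.
  rewrite (Rabs_pos_eq (x - 1)) in HPhi by lra.
  rewrite (Rabs_pos_eq (x + 1)) in HPhi by lra.
  assert (E : ln (x + r) - ln (x - r) = Rr * ((ln (x + 1) - ln x) + (ln x - ln (x - 1)))).
  { apply Rmult_eq_reg_l with (INR d); [|lra]. lra. }
  set (rho := x - r).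
  assert (Hrho : 0 < rho) by (unfold rho; lra).
  assert (U : ln (x + r) - ln (x - r) <= 2 * r / rho).
  { pose proof (ln_up (x + r) (x - r)) as H. replace (2 * r / rho) with ((x + r - (x - r)) / (x - r)) by (unfold rho; field; lra). apply H; lra. }
  assert (L1 : 1 / (x + 1) <= ln (x + 1) - ln x).
  { replace (1 / (x+1)) with ((x + 1 - x) / (x + 1)) by (field; lra). apply ln_lo; lra. }
  assert (L2 : 1 / x <= ln x - ln (x - 1)).
  { replace (1 / x) with ((x - (x - 1)) / x) by (field; lra). apply ln_lo; lra. }
  assert (B : 5 / (3 * x) <= 1 / (x + 1) + 1 / x).
  { assert (2 / (3 * x) <= 1 / (x + 1)).
    { apply Rmult_le_reg_r with (3 * x * (x + 1)); [nra|].
      field_simplify; [|lra|lra]. lra. }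
    replace (5 / (3 * x)) with (2 / (3 * x) + 1 / x) by (field; lra). lra. }
  assert (LB : Rr * (5 / (3 * x)) <= ln (x + r) - ln (x - r)).
  { rewrite E. apply Rmult_le_compat_l; lra. }
  assert (S1 : 3 * rho <= 2 * r).
  { assert (H1 : r * (5 / x) <= 2 * r / rho).
    { apply Rle_trans with (Rr * (5 / (3 * x))); [|lra].
      replace (Rr * (5 / (3 * x))) with ((Rr / 3) * (5 / x)) by (field; lra).
      apply Rmult_le_compat_r; [apply Rlt_le, Rdiv_lt_0_compat; lra| lra]. }
    assert (H2 : 5 * rho <= 2 * x).
    { apply Rmult_le_compat_r with (r := rho * x / r) in H1;
        [|apply Rlt_le, Rdiv_lt_0_compat; nra].
      replace (r * (5 / x) * (rho * x / r)) with (5 * rho) in H1 by (field; lra).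
      replace (2 * r / rho * (rho * x / r)) with (2 * x) in H1 by (field; lra). lra. }
    unfold rho in *. lra. }
  set (t := Rr / r).
  assert (T : t <= ln ((x + r) / (x - r))).
  { rewrite <- ln_div by lra. apply Rle_trans with (Rr * (5 / (3 * x))); [|lra].
    unfold t. apply Rmult_le_reg_r with (3 * x * r); [nra|].
    field_simplify; [|lra|lra]. assert (3 * x <= 5 * r) by (unfold rho in *; lra).
    assert (0 <= Rr) by lra. nra. }
  assert (Et : exp t <= 1 + 2 * r / rho).
  { replace (1 + 2 * r / rho) with ((x + r) / (x - r)) by (unfold rho; field; lra).
    rewrite <- (exp_ln ((x + r) / (x - r))) by (apply Rdiv_lt_0_compat; lra).
    destruct T as [T|T]; [left; apply exp_increasing; exact T| right; rewrite T; reflexivity]. }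
  assert (t3 : 3 <= t).
  { unfold t. apply Rmult_le_reg_r with r; [lra|]. field_simplify; lra. }
  assert (E5 : 5 < exp t).
  { assert (exp 3 <= exp t) by (destruct t3 as [h|h]; [left; apply exp_increasing; exact h| rewrite h; lra]).
    replace 3 with (3/2 + 3/2) in H by lra. rewrite exp_plus in H.
    pose proof (exp_ineq1_le (3/2)). nra. }
  assert (Q : rho * (exp t - 1) <= 2 * r).
  { apply Rmult_le_compat_l with (r := rho) in Et; [|lra].
    replace (rho * (1 + 2 * r / rho)) with (rho + 2 * r) in Et by (field; lra). lra. }
  assert (Q2 : 2 * rho < r) by nra.
  fold rho. fold t.
  apply Rmult_lt_reg_r with (2 * exp t); [lra|].
  replace (5 * r / (2 * exp t) * (2 * exp t)) with (5 * r) by (field; lra).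
  nra.
Qed.
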